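(* Consider the problem $F^*:=\min_{x\in\mathbb{R}^n} F(x)=\frac1{\ell}\sum_{i=1}^{\ell}f_i(x)+\psi(x)$ s.t. $a_i(x)\le0$, $i=1,\dots,m$, under the standing assumptions in the context, and let $\bar\xi:=\inf_{\lambda^*\in\Lambda^*}\|\lambda^*\|_\infty$. For every $\delta\ge0$ and $\xi>\bar\xi$, a minimizer $x^*_{\xi,\delta}$ of $F_{\xi,\delta}$ satisfies \[-\xi\|\bar A(x^*_{\xi,\delta})\|_1\le F(x^*_{\xi,\delta})-F^*\le m\xi\delta\log2.\] Furthermore, if $\mu>0$, the same inequalities hold also for $\xi=\bar\xi$.
   Context: Standing assumptions: (i) $F$ is $\mu$-strongly convex for some $\mu\ge0$; (ii) each $f_i$ is convex and $L_f$-smooth; (iii) $\psi$ is closed and convex; (iv) each $a_i$ is convex and $L_a$-smooth; (v) (Slater) there exist $s>0$, $\hat x$ with $a_i(\hat x)\le -s$ for all $i$; (vi) there exist $C_0>0$, $C_1\ge0$ with $\|\nabla a_i(x)\|_2^2\le C_0+C_1|a_i(x)|$ for all $x$, $i$. $\Lambda^*$ is the set of optimal dual solutions (KKT multiplier vectors) of the constrained problem. Softplus: $p_\delta(t)=\delta\log(1+\exp(t/\delta))$ for $\delta>0$, $p_0(t)=\max(0,t)$. Penalty reformulation: $F_{\xi,\delta}(x)=F(x)+\xi\sum_{i=1}^m p_\delta(a_i(x))$. $\bar A(x)=(\max(0,a_1(x)),\dots,\max(0,a_m(x)))^T$. *)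

(* Defs.v *)
From mathcomp Require Import all_boot all_order all_algebra.
From mathcomp Require Import all_classical all_reals all_analysis.
Set Implicit Arguments. Unset Strict Implicit. Unset Printing Implicit Defensive.
Import Order.TTheory GRing.Theory Num.Theory.
Import numFieldNormedType.Exports.
Local Open Scope classical_set_scope.
Local Open Scope ring_scope.

Section Defs.
Variable R : realType.

Definition dotv (k : nat) (u v : 'rV[R]_k) : R := \sum_(i < k) u 0 i * v 0 i.
Definition norm2 (k : nat) (u : 'rV[R]_k) : R := Num.sqrt (dotv u u).
Definition norm1 (k : nat) (u : 'rV[R]_k) : R := \sum_(i < k) `|u 0 i|.
Definition norminf (k : nat) (u : 'rV[R]_k) : R :=
  \big[Num.max/0]_(i < k) `|u 0 i|.

Variable n : nat.

Definition convex_fun (g : 'rV[R]_n -> R) : Prop :=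
  forall (x y : 'rV[R]_n) (t : R), 0 <= t <= 1 ->
    g (t *: x + (1 - t) *: y) <= t * g x + (1 - t) * g y.

Definition strongly_convex_e (mu : R) (G : 'rV[R]_n -> \bar R) : Prop :=
  forall (x y : 'rV[R]_n) (t : R), 0 < t < 1 ->
    (G (t *: x + (1 - t) *: y)%R <=
     t%:E * G x + (1 - t)%:E * G y
     - (mu / 2 * t * (1 - t) * norm2 (x - y) ^+ 2)%:E)%E.

Definition convex_e (G : 'rV[R]_n -> \bar R) : Prop := strongly_convex_e 0 G.

Definition proper_e (G : 'rV[R]_n -> \bar R) : Prop :=
  (forall x, G x != -oo%E) /\ exists x, (G x < +oo)%E.

Definition has_gradient (h : 'rV[R]_n -> R) (g : 'rV[R]_n -> 'rV[R]_n) : Prop :=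
  forall x, differentiable h x /\ forall v, 'd h x v = dotv (g x) v.

Definition lipschitz_grad (L : R) (g : 'rV[R]_n -> 'rV[R]_n) : Prop :=
  forall x y, norm2 (g x - g y) <= L * norm2 (x - y).

Definition softplus (delta t : R) : R :=
  if delta == 0 then Num.max 0 t else delta * ln (1 + expR (t / delta)).

Variables (l m : nat).

Definition Fobj (f : 'I_l -> 'rV[R]_n -> R) (psi : 'rV[R]_n -> \bar R)
  (x : 'rV[R]_n) : \bar R :=
  (((l%:R)^-1 * \sum_(i < l) f i x)%:E + psi x)%E.

Definition Fpen (f : 'I_l -> 'rV[R]_n -> R) (psi : 'rV[R]_n -> \bar R)
  (a : 'I_m -> 'rV[R]_n -> R) (xi delta : R) (x : 'rV[R]_n) : \bar R :=
  (Fobj f psi x + (xi * \sum_(i < m) softplus delta (a i x))%:E)%E.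

Definition feasible (a : 'I_m -> 'rV[R]_n -> R) : set 'rV[R]_n :=
  [set x | forall i, a i x <= 0].

Definition Fstar f psi a : \bar R := ereal_inf [set Fobj f psi x | x in feasible a].

Definition Abar (a : 'I_m -> 'rV[R]_n -> R) (x : 'rV[R]_n) : 'rV[R]_m :=
  \row_(i < m) Num.max 0 (a i x).

Definition dualfun f psi (a : 'I_m -> 'rV[R]_n -> R) (lam : 'rV[R]_m) : \bar R :=
  ereal_inf (range (fun x => (Fobj f psi x + (\sum_(i < m) lam 0 i * a i x)%:E)%E)).

Definition nonneg_vec (lam : 'rV[R]_m) : Prop := forall i, 0 <= lam 0 i.

Definition dual_opt f psi a : set 'rV[R]_m :=
  [set lam | nonneg_vec lam /\
     forall lam', nonneg_vec lam' -> (dualfun f psi a lam' <= dualfun f psi a lam)%E].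

(* xi_bar = inf_{lam in Lambda^*} ||lam||_inf  (+oo if Lambda^* is empty) *)
Definition xibar f psi a : \bar R :=
  ereal_inf [set (norminf lam)%:E | lam in dual_opt f psi a].

End Defs.

(* Main.v *)
Require Import Defs.
From mathcomp Require Import all_boot all_order all_algebra.
From mathcomp Require Import all_classical all_reals all_analysis.
From mathcomp Require Import ring lra.
Import Order.TTheory GRing.Theory Num.Theory.
Import numFieldNormedType.Exports.
Local Open Scope classical_set_scope.
Local Open Scope ring_scope.

Lemma core (R : realType) (n m : nat) (D : set 'rV[R]_n) (F : 'rV[R]_n -> R)
  (a : 'I_m -> 'rV[R]_n -> R) (p : R) (xh : 'rV[R]_n) (s0 : R) :
 (forall x y t, D x -> D y -> 0 < t < 1 ->
    D (t *: x + (1 - t) *: y) /\ F (t *: x + (1 - t) *: y) <= t * F x + (1 - t) * F y) ->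
 (forall i x y t, 0 <= t <= 1 -> a i (t *: x + (1 - t) *: y) <= t * a i x + (1 - t) * a i y) ->
 D xh -> 0 < s0 -> (forall i, a i xh <= - s0) ->
 (forall x, D x -> (forall i, a i x <= 0) -> p <= F x) ->
 forall k, (k <= m)%N -> exists c : 'I_m -> R, forall x (u : 'I_m -> R), D x ->
   (forall i : 'I_m, (k <= i)%N -> u i = 0) -> (forall i, a i x <= u i) ->
   p + \sum_i c i * u i <= F x.
Proof.
move=> Fcvx acvx Dxh s0gt0 Hxh Hp.
elim=> [|k IH] Hk.
  exists (fun _ => 0) => x u Dx Hu Hax.
  rewrite big1 ?addr0; last by move=> i _; rewrite mul0r.
  apply: Hp => // i; by rewrite -(Hu i).
have [c Hc] := IH (ltnW Hk).
set i0 : 'I_m := Ordinal Hk.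
pose L (w : 'I_m -> R) := \sum_i c i * w i.
pose V (w : 'I_m -> R) := forall i : 'I_m, (k <= i)%N -> w i = 0.
have key : forall x w1 t y w2 s, D x -> 0 < t -> V w1 ->
   (forall i, a i x <= w1 i + (if i == i0 then t else 0)) -> D y -> 0 < s -> V w2 ->
   (forall i, a i y <= w2 i - (if i == i0 then s else 0)) ->
   (p + L w2 - F y) / s <= (F x - p - L w1) / t.
  move=> x w1 t y w2 s Dx t0 V1 H1 Dy s0' V2 H2.
  set th := s / (s + t).
  have th01 : 0 < th < 1.
    apply/andP; split; first by rewrite divr_gt0 // addr_gt0.
    by rewrite ltr_pdivrMr ?addr_gt0 // mul1r ltrDl.
  have th1 : 1 - th = t / (s + t).
    rewrite /th; field; apply/eqP => /eqP; lra.
  have [Dz Fz] := Fcvx x y th Dx Dy th01.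
  set W := fun i => th * w1 i + (1 - th) * w2 i.
  have VW : V W by move=> i ki; rewrite /W V1 // V2 // !mulr0 addr0.
  have HW : forall i, a i (th *: x + (1 - th) *: y) <= W i.
    move=> i; apply: le_trans (acvx i x y th _) _.
      by case/andP: th01 => /ltW -> /ltW ->.
    have := H1 i; have := H2 i; rewrite /W th1 /th.
    case: (i == i0) => h2 h1.
      have e1 : s / (s + t) * a i x <= s / (s + t) * (w1 i + t).
        by rewrite ler_wpM2l // divr_ge0 // ?addr_ge0 // ltW.
      have e2 : t / (s + t) * a i y <= t / (s + t) * (w2 i - s).
        by rewrite ler_wpM2l // divr_ge0 // ?addr_ge0 // ltW.
      apply: le_trans (lerD e1 e2) _; rewrite le_eqVlt; apply/orP; left; apply/eqP.
      field; apply/eqP => /eqP; lra.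
    rewrite addr0 in h1; rewrite subr0 in h2.
    apply: lerD; rewrite ler_wpM2l // divr_ge0 // ?addr_ge0 // ltW //.
  have h0 : p + L W <= F (th *: x + (1 - th) *: y) := Hc _ W Dz VW HW.
  have LW : L W = th * L w1 + (1 - th) * L w2.
    rewrite /L /W !mulr_sumr -big_split /=; apply: eq_bigr => i _; ring.
  rewrite LW in h0; have h := le_trans h0 Fz.
  rewrite th1 /th in h.
  rewrite ler_pdivrMr // mulrAC ler_pdivlMr //.
  have st : 0 < s + t by rewrite addr_gt0.
  have := h; rewrite -(ler_pM2r st) => h'.
  set P := p * (s + t) in h'. 
  suff : t * (p + L w2 - F y) <= s * (F x - p - L w1) by lra.
  have e3 : (p + (s / (s + t) * L w1 + t / (s + t) * L w2)) * (s + t) =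
     p * (s + t) + s * L w1 + t * L w2 by field; apply/eqP => /eqP; lra.
  have e4 : (s / (s + t) * F x + t / (s + t) * F y) * (s + t) =
     s * F x + t * F y by field; apply/eqP => /eqP; lra.
  rewrite e3 e4 in h'.
  rewrite /P in h'; nra.
pose A := [set r : R | exists y w s, [/\ D y, 0 < s, V w,
   (forall i, a i y <= w i - (if i == i0 then s else 0)) & r = (p + L w - F y) / s]].
have V0 : V (fun _ => 0) by [].
have A0 : A !=set0.
  exists ((p + L (fun _ => 0) - F xh) / s0); exists xh, (fun _ => 0), s0; split => //.
  move=> i; case: (i == i0); rewrite ?subr0 ?sub0r //.
  by apply: le_trans (Hxh i) _; rewrite oppr_le0 ltW.
have ubA : ubound A ((F xh - p - L (fun _ => 0)) / 1).
  move=> r [y [w [s [Dy s0' Vw Hy ->]]]].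
  apply: (key xh _ 1 y w s) => // i.
  apply: le_trans (Hxh i) _; rewrite add0r; case: (i == i0).
    by apply: le_trans (_ : 0 <= 1); rewrite ?oppr_le0 ltW.
  by rewrite oppr_le0 ltW.
have hsA : has_sup A by split => //; exists ((F xh - p - L (fun _ => 0)) / 1).
set g := sup A.
exists (fun i => if i == i0 then g else c i) => x u Dx Hu Hax.
pose w := fun i => if i == i0 then 0 else u i.
pose t := u i0.
have Esum : \sum_i (if i == i0 then g else c i) * u i = L w + g * t.
  rewrite /L (bigD1 i0) //= [in RHS](bigD1 i0) //= eqxx /w eqxx mulr0 add0r addrC.
  congr (_ + _); apply: eq_bigr => i /negbTE ->; by [].
have Vw : V w.
  move=> i ki; rewrite /w; case: ifPn => // /eqP ni0.
  apply: Hu; rewrite ltn_neqAle ki andbT; apply/eqP => ki'; apply: ni0.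
  by apply: val_inj; rewrite /= ki'.
have Haw : forall i, a i x <= w i + (if i == i0 then t else 0).
  move=> i; rewrite /w /t; case: eqP => [->|]; first by rewrite add0r.
  by rewrite addr0.
rewrite Esum.
case: (ltgtP t 0) => ht.
- have hA : A ((p + L w - F x) / (- t)).
    exists x, w, (- t); split => //; first by rewrite oppr_gt0.
    move=> i; have := Haw i; case: (i == i0) => //; by rewrite ?opprK ?subr0 ?addr0.
  have := sup_upper_bound hsA hA; rewrite -/g ler_pdivrMr ?oppr_gt0 //.
  move=> h; nra.
- have : g <= (F x - p - L w) / t.
    apply: ge_sup => // r [y [w2 [s [Dy s0' Vw2 Hy ->]]]].
    exact: (key x w t y w2 s).
  rewrite ler_pdivlMr // => h; lra.
- rewrite ht mulr0 addr0; apply: Hc => // i.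
  by have := Haw i; rewrite ht if_same addr0.
Qed.
Theorem proposition1 (R : realType) (n l m : nat)
  (f : 'I_l -> 'rV[R]_n -> R) (psi : 'rV[R]_n -> \bar R)
  (a : 'I_m -> 'rV[R]_n -> R)
  (grad_f : 'I_l -> 'rV[R]_n -> 'rV[R]_n) (grad_a : 'I_m -> 'rV[R]_n -> 'rV[R]_n)
  (mu Lf La : R) :
  (0 < l)%N ->
  (* (i) F is mu-strongly convex, mu >= 0 *)
  0 <= mu -> strongly_convex_e mu (Fobj f psi) ->
  (* (ii) each f_i convex and Lf-smooth *)
  (forall i, convex_fun (f i)) ->
  (forall i, has_gradient (f i) (grad_f i)) ->
  (forall i, lipschitz_grad Lf (grad_f i)) ->
  (* (iii) psi proper, closed (lsc), convex *)
  proper_e psi -> lower_semicontinuous psi -> convex_e psi ->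
  (* (iv) each a_i convex and La-smooth *)
  (forall i, convex_fun (a i)) ->
  (forall i, has_gradient (a i) (grad_a i)) ->
  (forall i, lipschitz_grad La (grad_a i)) ->
  (* (v) Slater *)
  (exists (s : R) (xhat : 'rV[R]_n),
      0 < s /\ (psi xhat < +oo)%E /\ forall i, a i xhat <= - s) ->
  (* (vi) gradient growth *)
  (exists C0 C1 : R, 0 < C0 /\ 0 <= C1 /\
      forall i x, norm2 (grad_a i x) ^+ 2 <= C0 + C1 * `|a i x|) ->
  forall (delta xi : R) (xstar : 'rV[R]_n),
    0 <= delta ->
    ((xibar f psi a < xi%:E)%E \/ (0 < mu /\ xi%:E = xibar f psi a)) ->
    (forall y, (Fpen f psi a xi delta xstar <= Fpen f psi a xi delta y)%E) ->
    (- (xi * norm1 (Abar a xstar))%:E <= Fobj f psi xstar - Fstar f psi a)%E /\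
    (Fobj f psi xstar - Fstar f psi a <= (m%:R * xi * delta * ln 2)%:E)%E.
Proof.
Proof.
move=> l0 mu0 Fsc _ _ _ [psiNy _] _ _ acvx _ _ [s0 [xh [s0p [psixh Hxh]]]] _
  delta xi xs d0 Hxi Hmin.
set Fo := Fobj f psi.
have ecase : forall e : \bar R, e != -oo%E -> e = +oo%E \/ e = (fine e)%:E.
  by case=> [r| |] //= _; [right|left].
have FoNy : forall x, Fo x != -oo%E.
  move=> x; rewrite /Fo /Fobj; move: (psiNy x); case: (psi x) => //.
set D := [set x | (Fo x < +oo)%E].
pose Fr x := fine (Fo x).
have FoE : forall x, D x -> Fo x = (Fr x)%:E.
  move=> x Dx; case: (ecase _ (FoNy x)) => // h; by move: Dx; rewrite /D /= h.
have FoNE : forall x, ~ D x -> Fo x = +oo%E.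
  move=> x Dx; case: (ecase _ (FoNy x)) => // h; by exfalso; apply: Dx; rewrite /D /= h ltry.
have Fcvx : forall x y t, D x -> D y -> 0 < t < 1 ->
    D (t *: x + (1 - t) *: y) /\ Fr (t *: x + (1 - t) *: y) <= t * Fr x + (1 - t) * Fr y.
  move=> x y t Dx Dy t01; have := Fsc x y t t01.
  rewrite -/Fo (FoE x Dx) (FoE y Dy) => h0.
  have h : (Fo (t *: x + (1 - t) *: y)%R <= (t * Fr x + (1 - t) * Fr y -
     mu / 2 * t * (1 - t) * norm2 (x - y) ^+ 2)%:E)%E := h0.
  have Dz : D (t *: x + (1 - t) *: y) by apply: le_lt_trans h (ltry _).
  split => //; move: h; rewrite (FoE _ Dz) lee_fin => h; apply: le_trans h _.
  rewrite lerBlDr lerDl; case/andP: t01 => t0 t1.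
  apply: mulr_ge0; last exact: sqr_ge0.
  apply: mulr_ge0; last by rewrite subr_ge0 ltW.
  apply: mulr_ge0; last exact: ltW.
  by rewrite divr_ge0.
have norminf_ge0 : forall k (v : 'rV[R]_k), 0 <= norminf v.
  move=> k v; rewrite /norminf; apply: (big_ind (fun u => 0 <= u)) => //.
    by move=> u1 u2 hx hy; rewrite le_max hx.
have le_norminf : forall k (v : 'rV[R]_k) i, v 0 i <= norminf v.
  move=> k v i; apply: le_trans (ler_norm _) _.
  exact: (le_bigmax _ (fun i => `|v 0 i|) i).
have xibar_ge0 : (0 <= xibar f psi a)%E.
  apply: le_ereal_inf_tmp => _ [lam _ <-]; rewrite lee_fin; exact: norminf_ge0.
have xi0 : 0 <= xi.
  rewrite -lee_fin; case: Hxi => [h|[_ h]]; last by rewrite h.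
  exact: le_trans xibar_ge0 (ltW h).
have sp0 : forall t, 0 <= softplus delta t.
  move=> t; rewrite /softplus; case: eqP => [_|/eqP dn0]; first by rewrite le_max lexx.
  by apply: mulr_ge0 => //; apply: ln_ge0; rewrite lerDl expR_ge0.
have spl : forall t, t <= 0 -> softplus delta t <= delta * ln 2.
  move=> t t0; rewrite /softplus; case: eqP => [->|/eqP dn0].
    by rewrite mul0r ge_max lexx t0.
  apply: ler_wpM2l => //; rewrite ler_ln ?posrE ?addr_gt0 ?expR_gt0 //.
  have : expR (t / delta) <= 1.
    by rewrite expR_le1 mulr_le0_ge0 // invr_ge0.
  lra.
pose S x := \sum_i softplus delta (a i x).
have FpenE : forall x, Fpen f psi a xi delta x = (Fo x + (xi * S x)%:E)%E by [].
have Dxh : D xh.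
  rewrite /D /= /Fo /Fobj; move: psixh (psiNy xh); case: (psi xh) => // r _ _.
  exact: ltry.
have Dxs : D xs.
  have h := Hmin xh; rewrite !FpenE (FoE xh Dxh) in h.
  case: (pselect (D xs)) => // nD; move: h; by rewrite (FoNE _ nD).
have key1 : forall y, D y -> Fr xs + xi * S xs <= Fr y + xi * S y.
  move=> y Dy; have := Hmin y; by rewrite !FpenE (FoE _ Dxs) (FoE _ Dy).
set K := m%:R * xi * delta * ln 2.
have S0 : forall y, 0 <= S y by move=> y; apply: sumr_ge0 => i _.
have Sfeas : forall y, (forall i, a i y <= 0) -> S y <= m%:R * (delta * ln 2).
  move=> y hy; apply: le_trans (ler_sum _ (fun i _ => spl _ (hy i))) _.
  by rewrite sumr_const card_ord mulr_natl.
have upper : forall y, feasible a y -> ((Fr xs - K)%:E <= Fo y)%E.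
  move=> y fy; case: (pselect (D y)) => Dy; last by rewrite FoNE // leey.
  rewrite FoE // lee_fin; have h1 := key1 y Dy.
  have h2 : xi * S y <= xi * (m%:R * (delta * ln 2)) by rewrite ler_wpM2l // Sfeas.
  have h3 : 0 <= xi * S xs by rewrite mulr_ge0.
  have eK : K = xi * (m%:R * (delta * ln 2)) by rewrite /K; ring.
  rewrite eK; lra.
have Fst_lb : ((Fr xs - K)%:E <= Fstar f psi a)%E.
  apply: le_ereal_inf_tmp => _ [y fy <-]; exact: upper.
have Fst_ub : (Fstar f psi a <= Fo xh)%E.
  apply: ereal_inf_lbound; exists xh => // i.
  by apply: le_trans (Hxh i) _; rewrite oppr_le0 ltW.
set p := fine (Fstar f psi a).
have FstE : Fstar f psi a = p%:E.
  move: Fst_lb Fst_ub; rewrite /p FoE //; by case: (Fstar _ _ _).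
have pge : Fr xs - K <= p by rewrite -lee_fin -FstE.
rewrite FstE FoE // -EFinB !lee_fin; split; last by lra.
have Hp : forall x, D x -> (forall i, a i x <= 0) -> p <= Fr x.
  move=> x Dx hx; rewrite -lee_fin -FstE -FoE //.
  by apply: ereal_inf_lbound; exists x.
have [c Hc] := @core _ _ _ _ _ _ _ _ _ Fcvx (fun i => acvx i) Dxh s0p Hxh Hp m (leqnn m).
have Hc' : forall x u, D x -> (forall i, a i x <= u i) -> p + \sum_i c i * u i <= Fr x.
  move=> x u Dx hu; apply: Hc => // i; by rewrite leqNgt ltn_ord.
have cle0 : forall j, c j <= 0.
  move=> j; rewrite leNgt; apply/negP => cj.
  set Kx := Fr xh - p - \sum_i c i * a i xh.
  pose d := (`|Kx| + 1) / c j.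
  have d0' : 0 <= d by rewrite divr_ge0 // ?addr_ge0 // ltW.
  have := Hc' xh (fun i => a i xh + (if i == j then d else 0)) Dxh.
  have e1 : \sum_i c i * (a i xh + (if i == j then d else 0)) =
     \sum_i c i * a i xh + c j * d.
    under eq_bigr do rewrite mulrDr.
    rewrite big_split /=; congr (_ + _).
    rewrite (bigD1 j) //= eqxx big1 ?addr0 //.
    by move=> i /negbTE ->; rewrite mulr0.
  have e2 : c j * d = `|Kx| + 1 by rewrite /d mulrCA divff ?mulr1 // gt_eqF.
  rewrite e1 e2 => h.
  have : p + (\sum_i c i * a i xh + (`|Kx| + 1)) <= Fr xh.
    apply: h => i; rewrite lerDl; by case: (i == j).
  have := ler_norm Kx; rewrite /Kx; lra.
pose lam : 'rV[R]_m := \row_i (- c i).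
have lam_nn : nonneg_vec lam by move=> i; rewrite mxE oppr_ge0.
have dlam : (p%:E <= dualfun f psi a lam)%E.
  apply: le_ereal_inf_tmp => _ [x _ <-].
  case: (pselect (D x)) => Dx; first last. by rewrite -/Fo FoNE // addye // leey.
  rewrite -/Fo FoE // lee_fin.
  have := Hc' x (fun i => a i x) Dx (fun i => lexx _).
  have -> : \sum_i lam 0 i * a i x = - \sum_i c i * a i x.
    rewrite -sumrN; apply: eq_bigr => i _; by rewrite mxE mulNr.
  lra.
have Hlam : forall e, 0 < e -> exists2 L, dual_opt f psi a L & norminf L < xi + e.
  move=> e e0; have : (xibar f psi a < (xi + e)%:E)%E.
    case: Hxi => [h|[_ h]]; last by rewrite -h lte_fin ltrDl.
    by apply: lt_trans h _; rewrite lte_fin ltrDl.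
  rewrite /xibar => /ereal_inf_lt [_ [L HL <-]]; rewrite lte_fin => h; by exists L.
set S1 := norm1 (Abar a xs).
have S1E : S1 = \sum_i Num.max 0 (a i xs).
  rewrite /S1 /norm1 /Abar; apply: eq_bigr => i _.
  by rewrite mxE ger0_norm // le_max lexx.
have S10 : 0 <= S1 by rewrite S1E; apply: sumr_ge0 => i _; rewrite le_max lexx.
suff : p <= Fr xs + xi * S1 by lra.
apply/ler_addgt0Pr => e e0.
have e'0 : 0 < e / (S1 + 1) by rewrite divr_gt0 // ltr_wpDl.
have [L [Lnn Lopt] HL] := Hlam _ e'0.
have h1 := le_trans dlam (Lopt lam lam_nn).
have h2 : (dualfun f psi a L <= Fo xs + (\sum_i L 0 i * a i xs)%:E)%E.
  by apply: ereal_inf_lbound; exists xs.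
have h3 := le_trans h1 h2; rewrite FoE // -EFinD lee_fin in h3.
have h4 : \sum_i L 0 i * a i xs <= (xi + e / (S1 + 1)) * S1.
  set c' := xi + e / (S1 + 1).
  rewrite S1E mulr_sumr; apply: ler_sum => i _.
  have hL : L 0 i <= c'.
    exact: le_trans (le_norminf _ L i) (ltW HL).
  have hM : 0 <= Num.max 0 (a i xs) by rewrite le_max lexx.
  have hM' : a i xs <= Num.max 0 (a i xs) by rewrite le_max lexx orbT.
  have hLn := Lnn i.
  exact: le_trans (ler_wpM2l hLn hM') (ler_wpM2r hM hL).
have h5 : e / (S1 + 1) * S1 <= e.
  rewrite mulrAC ler_pdivrMr ?ltr_wpDl //; nra.
rewrite mulrDl in h4; lra.
Qed.
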